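(* Let $r \in \mathbb{Q}_{>0}$ be such that $S_r$ is atomic. Then there exists $x \in S_r$ with $\rho(x) = \rho(S_r)$ (i.e., the elasticity of $S_r$ is accepted) if and only if $r \in \mathbb{N}$ or $r < 1$.
   Context: For $q \in \mathbb{Q}_{>0}$, $\mathsf{n}(q),\mathsf{d}(q)$ are the positive coprime integers with $q = \mathsf{n}(q)/\mathsf{d}(q)$. $S_r$ is the additive submonoid of $(\mathbb{Q}_{\ge 0},+)$ generated by $\{r^n : n \in \mathbb{N}_0\}$; it is atomic exactly when $r=1$ or $\mathsf{n}(r)>1$. $\mathsf{L}(x)$ denotes the set of lengths of factorizations of $x$ into atoms. The elasticity of $x \ne 0$ is $\rho(x) = \sup \mathsf{L}(x)/\inf \mathsf{L}(x) \in \mathbb{Q}_{\ge 1} \cup \{\infty\}$, $\rho(0)=1$, and $\rho(S_r) = \sup\{\rho(x) : x \in S_r \setminus \{0\}\}$. *)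

(* Defs.v *)
From HB Require Import structures.
From mathcomp Require Import all_boot all_order all_algebra.
Set Implicit Arguments. Unset Strict Implicit. Unset Printing Implicit Defensive.
Import Order.TTheory GRing.Theory Num.Theory.
Local Open Scope ring_scope.

Definition in_Sr (r x : rat) : Prop :=
  exists c : seq nat, x = \sum_(i < size c) (nth 0%N c i)%:R * r ^+ i.

Definition atom_Sr (r a : rat) : Prop :=
  [/\ in_Sr r a, a <> 0 &
      forall b c, in_Sr r b -> in_Sr r c -> a = b + c -> b = 0 \/ c = 0].

(* a factorization of x: a (multi)set of atoms, listed as a sequence, summing to x *)
Definition factorization (r x : rat) (s : seq rat) : Prop :=
  (forall a, a \in s -> atom_Sr r a) /\ \sum_(a <- s) a = x.

Definition atomic_Sr (r : rat) : Prop :=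
  forall x, in_Sr r x -> x <> 0 -> exists s, factorization r x s.

Definition in_L (r x : rat) (n : nat) : Prop :=
  exists s, factorization r x s /\ size s = n.

Inductive erat := EFin of rat | EInf.

Definition ele (e f : erat) : Prop :=
  match e, f with
  | _, EInf => True
  | EInf, EFin _ => False
  | EFin a, EFin b => a <= b
  end.

(* rho_x r x e : e is the elasticity rho(x) = sup L(x) / inf L(x) (rho(0) = 1) *)
Definition rho_x (r x : rat) (e : erat) : Prop :=
  (x = 0 /\ e = EFin 1) \/
  (x <> 0 /\ exists m, in_L r x m /\ (forall n, in_L r x n -> (m <= n)%N) /\
     ((exists M, in_L r x M /\ (forall n, in_L r x n -> (n <= M)%N) /\
                 e = EFin (M%:R / m%:R)) \/
      ((forall N, exists n, in_L r x n /\ (N < n)%N) /\ e = EInf))).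

Definition rho_S (r : rat) (e : erat) : Prop :=
  (forall x f, in_Sr r x -> x <> 0 -> rho_x r x f -> ele f e) /\
  (forall e', (forall x f, in_Sr r x -> x <> 0 -> rho_x r x f -> ele f e') -> ele e e').

(* Main.v *)
Require Import Defs.
From HB Require Import structures.
From mathcomp Require Import all_boot all_order all_algebra.
From mathcomp Require Import ring lra zify.
From Stdlib Require Import Classical.
Import Order.TTheory GRing.Theory Num.Theory.
Local Open Scope ring_scope.

Definition F (r : rat) (c : seq nat) : rat :=
  \sum_(i < size c) (nth 0%N c i)%:R * r ^+ i.

Lemma F_nil r : F r [::] = 0. Proof. by rewrite /F big_ord0. Qed.
Lemma F_cons r c0 c : F r (c0 :: c) = c0%:R + r * F r c.
Proof.
rewrite /F /= big_ord_recl /= expr0 mulr1; congr (_ + _).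
rewrite mulr_sumr; apply: eq_bigr => i _.
by rewrite exprS mulrCA.
Qed.

Lemma inSrE r x : in_Sr r x <-> exists c, x = F r c.
Proof. by []. Qed.

Lemma F_add r c d : exists e, F r e = F r c + F r d.
Proof.
elim: c d => [|c0 c IH] d; first by exists d; rewrite F_nil add0r.
case: d => [|d0 d]; first by exists (c0::c); rewrite F_nil addr0.
have [e He] := IH d. exists ((c0+d0)%N :: e). rewrite !F_cons He natrD. ring.
Qed.

Lemma Sr0 r : in_Sr r 0. Proof. by apply/inSrE; exists [::]; rewrite F_nil. Qed.
Lemma Srnat r n : in_Sr r n%:R.
Proof. by apply/inSrE; exists [:: n]; rewrite F_cons F_nil mulr0 addr0. Qed.
Lemma SrD r x y : in_Sr r x -> in_Sr r y -> in_Sr r (x + y).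
Proof. move=> [c ->] [d ->]; have [e He] := F_add r c d; by exists e. Qed.
Lemma SrM r x : in_Sr r x -> in_Sr r (r * x).
Proof.
move=> [c ->]; apply/inSrE; exists (0%N :: c); by rewrite F_cons add0r.
Qed.
Lemma SrX r k : in_Sr r (r ^+ k).
Proof. elim: k => [|k IH]; first exact: (Srnat r 1). by rewrite exprS; apply: SrM. Qed.
Lemma SrMn r n x : in_Sr r x -> in_Sr r (n%:R * x).
Proof.
move=> hx; elim: n => [|n IH]; first by rewrite mul0r; apply: Sr0.
by rewrite -addn1 natrD mulrDl mul1r addrC; apply: SrD.
Qed.

Lemma F_ge0 r c : 0 < r -> 0 <= F r c.
Proof.
move=> hr; elim: c => [|c0 c IH]; first by rewrite F_nil.
rewrite F_cons; apply: addr_ge0 => //; exact: mulr_ge0 (ltW hr) IH.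
Qed.

Lemma F_ge1 r c : 1 <= r -> F r c = 0 \/ 1 <= F r c.
Proof.
move=> hr; elim: c => [|c0 c IH]; first by left; rewrite F_nil.
rewrite F_cons; case: c0 => [|c0].
- case: IH => [->|h]; first by left; rewrite mulr0 addr0.
  right; rewrite add0r. have : r <= r * F r c.
    by rewrite -{1}(mulr1 r) ler_wpM2l //; lra.
  lra.
- right. have h0 : 0 <= r * F r c by apply: mulr_ge0; [lra | apply: F_ge0; lra].
  have h1 : 1 <= (c0.+1)%:R :> rat by rewrite ler1n.
  lra.
Qed.

Lemma Sr_ge1 r x : 1 <= r -> in_Sr r x -> x <> 0 -> 1 <= x.
Proof. move=> hr [c ->]; by case: (F_ge1 r c hr). Qed.

Lemma denom_bound r (a b : nat) : 1 <= r -> r * b%:R = a%:R ->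
  forall k c, F r c < r ^+ k.+1 -> exists n : nat, F r c * b%:R ^+ k = n%:R.
Proof.
move=> r1 hab; elim=> [|k IH] [|c0 c] h.
- by exists 0%N; rewrite F_nil mul0r.
- rewrite F_cons in h. case: (F_ge1 r c r1) => [H|H].
    by exists c0; rewrite F_cons H mulr0 addr0 expr0 mulr1.
  exfalso. have : r <= r * F r c by rewrite -{1}(mulr1 r) ler_wpM2l //; lra.
  have : 0 <= c0%:R :> rat by [].
  rewrite expr1 in h. lra.
- by exists 0%N; rewrite F_nil mul0r.
- rewrite F_cons in h.
  have h' : F r c < r ^+ k.+1.
    have hr0 : 0 < r by lra.
    rewrite -(ltr_pM2l hr0) -exprS.
    have : 0 <= c0%:R :> rat by []. lra.
  have [n Hn] := IH c h'. exists (c0 * b ^ k.+1 + a * n)%N.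
  rewrite F_cons natrD !natrM natrX -Hn -hab exprS. ring.
Qed.

Lemma atom_pow r a b k : 1 <= r -> r * b%:R = a%:R -> coprime a b -> (1 < b)%N ->
  atom_Sr r (r ^+ k).
Proof.
move=> r1 hab cab b1; split; first exact: SrX.
  apply/eqP; apply: expf_neq0; apply: lt0r_neq0; lra.
move=> u v /inSrE [cu ->] /inSrE [cv ->] E.
case: (F_ge1 r cu r1) => Hu; first by left.
case: (F_ge1 r cv r1) => Hv; first by right.
exfalso. case: k E => [|k] E.
  rewrite expr0 in E. lra.
move: E; move Et: (r ^+ k.+1) => t E.
have hu : F r cu < r ^+ k.+1 by rewrite Et; lra.
have hv : F r cv < r ^+ k.+1 by rewrite Et; lra.
have [n1 H1] := @denom_bound r a b r1 hab k cu hu.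
have [n2 H2] := @denom_bound r a b r1 hab k cv hv.
have Ha : (a ^ k.+1)%N = ((n1 + n2) * b)%N.
  apply/eqP; rewrite -(eqr_nat rat) natrM natrD !natrX -H1 -H2 -hab exprMn Et E.
  rewrite exprS; apply/eqP; ring.
have hd : (b %| a ^ k.+1)%N by rewrite Ha dvdn_mull.
have := coprimeXl k.+1 cab. rewrite /coprime (gcdn_idPr hd) => /eqP hb.
by rewrite hb in b1.
Qed.

Lemma sum_ge_size (s : seq rat) : (forall a, a \in s -> 1 <= a) ->
  (size s)%:R <= \sum_(a <- s) a.
Proof.
elim: s => [|x s IH] h; first by rewrite big_nil.
rewrite big_cons /= -addn1 natrD.
have h1 : 1 <= x by apply: h; rewrite inE eqxx.
have h2 := IH (fun a ha => h a (mem_behead (s:=x::s) ha)).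
lra.
Qed.

Lemma sum_nseq (n : nat) (c : rat) : \sum_(a <- nseq n c) a = c * n%:R.
Proof.
elim: n => [|n IH]; first by rewrite big_nil mulr0.
by rewrite /= big_cons IH -addn1 natrD; ring.
Qed.

Lemma ex_min_prop (P : nat -> Prop) : (exists n, P n) ->
  exists m, P m /\ forall n, P n -> (m <= n)%N.
Proof.
move=> [n0 Pn0].
have H : forall N n, (n <= N)%N -> P n -> exists m, P m /\ forall k, P k -> (m <= k)%N.
  elim=> [|N IH] n hn Pn.
    exists n; split=> // k _. by rewrite leqn0 in hn; rewrite (eqP hn).
  case: (classic (exists k, P k /\ (k < n)%N)) => [[k [Pk hk]]|Hno].
    by apply: (IH k) => //; rewrite -ltnS (leq_trans hk hn).
  exists n; split=> // k Pk. rewrite leqNgt; apply/negP => hk; apply: Hno; by exists k.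
exact: (H n0 n0 (leqnn _) Pn0).
Qed.

Lemma ex_max_prop (P : nat -> Prop) B : (exists n, P n) -> (forall n, P n -> (n <= B)%N) ->
  exists M, P M /\ forall n, P n -> (n <= M)%N.
Proof.
elim: B => [|B IH] hex hB.
  exists 0%N; split=> //. case: hex => n Pn. by have := hB n Pn; rewrite leqn0 => /eqP <-.
case: (classic (P B.+1)) => HP; first by exists B.+1.
apply: IH => // n Pn. have := hB n Pn. rewrite leq_eqVlt => /orP [/eqP E|//].
by rewrite E in Pn.
Qed.
Section P3.
Local Set Implicit Arguments. Local Unset Strict Implicit.

Lemma atom_ge1 r a : 1 <= r -> atom_Sr r a -> 1 <= a.
Proof. move=> r1 [ha h0 _]; exact: Sr_ge1 r1 ha h0. Qed.

Lemma len_bound r x n : 1 <= r -> in_L r x n -> n%:R <= x.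
Proof.
move=> r1 [s [[hat <-] <-]]; apply: sum_ge_size => a ha; exact: atom_ge1 r1 (hat a ha).
Qed.

Lemma len_pos r x n : x <> 0 -> in_L r x n -> (0 < n)%N.
Proof.
move=> x0 [s [[_ hs] <-]]; case: s hs => [|? ?] //= hs.
by exfalso; apply: x0; rewrite -hs big_nil.
Qed.

Lemma rho_fin r x : 1 <= r -> x <> 0 -> (exists n, in_L r x n) ->
  exists m M, [/\ in_L r x m, (forall n, in_L r x n -> (m <= n)%N),
     in_L r x M, (forall n, in_L r x n -> (n <= M)%N) &
     rho_x r x (EFin (M%:R / m%:R))].
Proof.
move=> r1 x0 hex.
have [m [Hm Hmin]] := @ex_min_prop _ hex.
have Bx : x < (Num.Def.archi_bound x)%:R.
  apply: archi_boundP. have [n hn] := hex. have := len_bound r1 hn.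
  have : 0 <= n%:R :> rat by []. lra.
have [M [HM Hmax]] : exists M, in_L r x M /\ forall n, in_L r x n -> (n <= M)%N.
  apply: (@ex_max_prop _ (Num.Def.archi_bound x)) => // n hn.
  have := len_bound r1 hn => h. apply: ltnW. rewrite -(ltr_nat rat). lra.
exists m, M; split=> //. right; split=> //. exists m; split=> //; split=> //.
left; exists M; split=> //.
Qed.

Lemma bernoulli (r : rat) k : 1 <= r -> 1 + k%:R * (r - 1) <= r ^+ k.
Proof.
move=> r1; elim: k => [|k IH]; first by rewrite expr0 mul0r addr0.
rewrite exprS -addn1 natrD.
have h : r * (1 + k%:R * (r - 1)) <= r * r ^+ k by rewrite ler_wpM2l //; lra.
have : 0 <= k%:R * (r - 1) * (r - 1).
  apply: mulr_ge0; last lra. apply: mulr_ge0 => //; lra.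
nra.
Qed.

Lemma no_accept r (a b : nat) : 1 < r -> r * b%:R = a%:R -> coprime a b -> (1 < b)%N ->
  forall x e, in_Sr r x -> rho_x r x e -> rho_S r e -> False.
Proof.
move=> r1 hab cab b1 x e hx Hrho [HS _].
have r1' : 1 <= r by lra.
have ha : (0 < a)%N.
  rewrite -(ltr_nat rat) -hab. apply: mulr_gt0; first lra. by rewrite ltr0n; lia.
have Y0 : forall k, (a ^ k)%N%:R <> 0 :> rat.
  by move=> k; move/eqP; rewrite pnatr_eq0 expn_eq0 => /andP [/eqP a0 _]; rewrite a0 in ha.
have key : forall k, exists q, rho_x r (a ^ k)%N%:R (EFin q) /\ r ^+ k <= q.
  move=> k. have y0 := Y0 k.
  have L1 : in_L r (a ^ k)%N%:R (a ^ k)%N.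
    exists (nseq (a ^ k)%N 1); split; last by rewrite size_nseq.
    split; last by rewrite sum_nseq mul1r.
    move=> z; rewrite mem_nseq => /andP [_ /eqP ->].
    by have := @atom_pow r a b 0 r1' hab cab b1; rewrite expr0.
  have L2 : in_L r (a ^ k)%N%:R (b ^ k)%N.
    exists (nseq (b ^ k)%N (r ^+ k)); split; last by rewrite size_nseq.
    split; last by rewrite sum_nseq !natrX -exprMn hab.
    move=> z; rewrite mem_nseq => /andP [_ /eqP ->].
    exact: (@atom_pow r a b k r1' hab cab b1).
  have [m [M [Hm Hmin HM Hmax Hr]]] := rho_fin r1' y0 (ex_intro _ _ L1).
  exists (M%:R / m%:R); split=> //.
  have m0 : (0 < m)%N := len_pos y0 Hm.
  have hmb := Hmin _ L2. have haM := Hmax _ L1.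
  rewrite ler_pdivlMr ?ltr0n //.
  have e1 : r ^+ k * m%:R <= r ^+ k * (b ^ k)%N%:R.
    rewrite ler_wpM2l ?ler_nat //. apply: exprn_ge0; lra.
  have e2 : r ^+ k * (b ^ k)%N%:R = (a ^ k)%N%:R by rewrite !natrX -exprMn hab.
  have e3 : (a ^ k)%N%:R <= M%:R :> rat by rewrite ler_nat.
  lra.
case: e Hrho HS => [q|] Hrho HS.
- set k := Num.Def.archi_bound (`|q| / (r - 1)).
  have hk : `|q| / (r - 1) < k%:R by apply: archi_boundP; apply: divr_ge0 => //; lra.
  rewrite ltr_pdivrMr in hk; last lra.
  have [q' [Hq' Hle]] := key k.
  have hq : q' <= q.
    exact: (HS _ _ (Srnat r _) (Y0 k) Hq').
  have h1 := bernoulli k r1'. have h2 := ler_norm q.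
  move: hk hq Hle h1 h2. move: (k%:R * (r - 1)) (r ^+ k) `|q| => A B C. lra.
- case: Hrho => [[_ H]|[x0 [m [Hm [_ [[M [_ [_ H]]]|[Hunb _]]]]]]]; try discriminate.
  have [n [hn hN]] := Hunb (Num.Def.archi_bound x).
  have h1 := len_bound r1' hn.
  have h2 : x < (Num.Def.archi_bound x)%:R.
    apply: archi_boundP. have : 0 <= n%:R :> rat by []. lra.
  have : (Num.Def.archi_bound x)%:R < n%:R :> rat by rewrite ltr_nat.
  lra.
Qed.
End P3.
Section P4.
Local Set Implicit Arguments. Local Unset Strict Implicit.

Lemma atom_one r : 1 <= r -> atom_Sr r 1.
Proof.
move=> r1; split; first exact: (Srnat r 1). by apply/eqP; rewrite oner_eq0.
move=> u v hu hv E.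
case: (classic (u = 0)) => [|u0]; first by left.
case: (classic (v = 0)) => [|v0]; first by right.
have := @Sr_ge1 r u r1 hu u0; have := @Sr_ge1 r v r1 hv v0. lra.
Qed.

Lemma Sn_nat (n : nat) x : in_Sr n%:R x -> exists k : nat, x = k%:R.
Proof.
move=> /inSrE [c ->]; elim: c => [|c0 c [k Hk]]; first by exists 0%N; rewrite F_nil.
by exists (c0 + n * k)%N; rewrite F_cons Hk natrD natrM.
Qed.

Lemma atom_int (n : nat) a : (0 < n)%N -> atom_Sr n%:R a -> a = 1.
Proof.
move=> n0 [ha a0 hat]. have [k Hk] := Sn_nat ha.
have k0 : k <> 0%N by move=> E; apply: a0; rewrite Hk E.
case: (leqP k 1) => hk. by rewrite Hk; have -> : k = 1%N by lia.
exfalso. have E : a = 1 + (k.-1)%:R.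
  by rewrite Hk -{1}(@prednK k) ?lt0n; [rewrite -natr1 addrC | apply/eqP].
have [] := hat _ _ (Srnat _ 1) (Srnat _ _) E.
- by apply/eqP; rewrite oner_eq0.
- move/eqP; rewrite pnatr_eq0; lia.
Qed.

Lemma sum_ones (s : seq rat) : (forall a, a \in s -> a = 1) -> \sum_(a <- s) a = (size s)%:R.
Proof.
elim: s => [|x s IH] h; first by rewrite big_nil.
rewrite big_cons /= IH; last by move=> a ha; apply: h; rewrite inE ha orbT.
by rewrite (h x (mem_head _ _)) -natr1 addrC.
Qed.

Lemma len_int (n : nat) x l : (0 < n)%N -> in_L n%:R x l -> x = l%:R.
Proof.
move=> n0 [s [[hat <-] <-]]; apply: sum_ones => a ha; exact: atom_int n0 (hat a ha).
Qed.

Lemma int_case (n : nat) : 0 < n%:R :> rat ->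
  exists x e, [/\ in_Sr n%:R x, rho_x n%:R x e & rho_S n%:R e].
Proof.
move=> hn; have n0 : (0 < n)%N by rewrite -(ltr_nat rat).
have r1 : 1 <= n%:R :> rat by rewrite ler1n.
have L1 : in_L n%:R 1 1.
  exists [:: 1]; split=> //; split; last by rewrite big_cons big_nil addr0.
  by move=> a; rewrite inE => /eqP ->; apply: atom_one.
have Hr1 : rho_x n%:R 1 (EFin 1).
  right; split; first by apply/eqP; rewrite oner_eq0.
  exists 1%N; split=> //; split.
    by move=> k hk; have := len_int n0 hk => /esym/eqP; rewrite pnatr_eq1 => /eqP ->.
  left; exists 1%N; split=> //; split; last by rewrite divr1.
  by move=> k hk; have := len_int n0 hk => /esym/eqP; rewrite pnatr_eq1 => /eqP ->.
exists 1, (EFin 1); split=> //; first exact: (Srnat _ 1).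
split.
- move=> x f hx x0 [[x0' _]|[_ [m [Hm [_ [[M [HM [_ ->]]]|[Hunb _]]]]]]]; first by [].
  + have Em := len_int n0 Hm; have EM := len_int n0 HM.
    have m0 : m%:R != 0 :> rat by apply/eqP; rewrite -Em.
    by rewrite /= -EM Em divff.
  + have [k [hk hmk]] := Hunb m. have Ek := len_int n0 hk. have Em := len_int n0 Hm.
    move: Ek; rewrite Em => /eqP; rewrite eqr_nat => /eqP E. by rewrite E ltnn in hmk.
- move=> e' H; exact: (H 1 (EFin 1) (Srnat _ 1) (ltac:(by apply/eqP; rewrite oner_eq0)) Hr1).
Qed.
End P4.
Section P5.
Local Set Implicit Arguments. Local Unset Strict Implicit.

Lemma Sr_pos r x : 0 < r -> in_Sr r x -> x <> 0 -> 0 < x.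
Proof.
move=> hr /inSrE [c ->] x0; rewrite lt_neqAle F_ge0 // andbT.
by apply/eqP => E; apply: x0.
Qed.

Lemma decomp r (a b : nat) : 0 < r -> r * b%:R = a%:R -> (a < b)%N ->
  forall k, exists L t, [/\ (forall z, z \in L -> in_Sr r z /\ z <> 0), in_Sr r t,
     0 < t, size L = k & \sum_(z <- L) z + a%:R * t = a%:R].
Proof.
move=> hr hab hlt; elim=> [|k [L [t [HL Ht t0 HS HE]]]].
  exists [::], 1; split=> //; first exact: (Srnat r 1).
  by rewrite big_nil add0r mulr1.
have hba : 0 < (b - a)%N%:R :> rat by rewrite ltr0n subn_gt0.
exists ((b - a)%N%:R * (r * t) :: L), (r * t); split.
- move=> z; rewrite inE => /orP [/eqP ->|hz]; last exact: HL.
  split; first by apply: SrMn; apply: SrM.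
  apply/eqP; rewrite gt_eqF //; apply: mulr_gt0 => //; exact: mulr_gt0.
- exact: SrM.
- exact: mulr_gt0.
- by rewrite /= HS.
- rewrite big_cons natrB ?(ltnW hlt) //.
  have E2 : a%:R * t = (r * b%:R) * t by rewrite hab.
  move: HE E2; move: (\sum_(z <- L) z) (a%:R) (b%:R) => S A B HE E2.
  lra.
Qed.

Lemma factor_list r (hat : atomic_Sr r) (L : seq rat) :
  (forall z, z \in L -> in_Sr r z /\ z <> 0) ->
  exists s, factorization r (\sum_(z <- L) z) s /\ (size L <= size s)%N.
Proof.
elim: L => [|z L IH] H.
  by exists [::]; split=> //; split=> //; rewrite !big_nil.
have [hz z0] := H z (mem_head _ _).
have [s [[sat ssum] ssz]] := IH (fun w hw => H w (mem_behead (s:=z::L) hw)).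
have [sz [szat szsum]] := hat z hz z0.
have szpos : (0 < size sz)%N.
  by case: sz szat szsum => [|? ?] //= _ E; exfalso; apply: z0; rewrite -E big_nil.
exists (sz ++ s); split; last by rewrite size_cat /=; lia.
split; last by rewrite big_cat big_cons szsum ssum.
by move=> w; rewrite mem_cat => /orP [hw|hw]; [apply: szat | apply: sat].
Qed.

Theorem proposition4p3 (r : rat) (hr : 0 < r) (hat : atomic_Sr r) :
  (exists x e, [/\ in_Sr r x, rho_x r x e & rho_S r e]) <->
  ((exists n : nat, r = n%:R) \/ r < 1).
Proof.
set a := `|numq r|%N. set b := `|denq r|%N.
have hab : r * b%:R = a%:R.
  rewrite /a /b !natr_absz !ger0_norm ?numq_ge0 ?(ltW hr) ?(ltW (denq_gt0 r)) //.
  by rewrite -{1}(divq_num_den r) divfK // intr_eq0 denq_neq0.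
have cab : coprime a b by apply: coprime_num_den.
have b0 : (0 < b)%N by rewrite /b absz_gt0 denq_neq0.
split.
- move=> [x [e [hx Hrho HS]]].
  case: (boolP (denq r == 1)) => hd.
    left; apply/ratArchimedean.natrP => /=; by rewrite (ltW hr) hd.
  case: (ltrP r 1) => hr1; first by right.
  exfalso.
  have b1 : (1 < b)%N.
    rewrite /b; move: hd (denq_gt0 r); lia.
  have r1 : 1 < r.
    rewrite lt_neqAle hr1 andbT; apply/negP => /eqP E.
    by move: hd; rewrite -E.
  exact: (no_accept r1 hab cab b1 hx Hrho HS).
- case=> [[n hn]|hr1].
    by rewrite hn; apply: int_case; rewrite -hn.
  have hlt : (a < b)%N.
    rewrite -(ltr_nat rat) -hab. have : 0 < b%:R :> rat by rewrite ltr0n.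
    move=> h; rewrite gtr_pMl //.
  have ha : (0 < a)%N by rewrite -(ltr_nat rat) -hab; apply: mulr_gt0 => //; rewrite ltr0n.
  have a0 : a%:R <> 0 :> rat by apply/eqP; rewrite pnatr_eq0 -lt0n.
  have hx : in_Sr r a%:R := Srnat r a.
  have Hrho : rho_x r a%:R EInf.
    right; split=> //.
    have [s fs] := hat _ hx a0.
    have [m [Hm Hmin]] := @ex_min_prop (in_L r a%:R) (ex_intro _ (size s) (ex_intro _ s (conj fs erefl))).
    exists m; split=> //; split=> //; right; split=> // N.
    have [L [t [HL Ht t0 HSz HE]]] := decomp hr hab hlt N.
    have HL' : forall z, z \in (a%:R * t :: L) -> in_Sr r z /\ z <> 0.
      move=> z; rewrite inE => /orP [/eqP ->|hz]; last exact: HL.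
      split; first exact: SrMn.
      apply/eqP; rewrite gt_eqF //; apply: mulr_gt0 => //; by rewrite ltr0n.
    have [s' [fs' hsz]] := factor_list hat HL'.
    exists (size s'); split; last by move: hsz; rewrite /= HSz.
    exists s'; split=> //. by move: fs'; rewrite big_cons addrC HE.
  exists a%:R, EInf; split=> //; split.
  + by move=> x f _ _ _; case: f.
  + by move=> e' H; move: (H _ _ hx a0 Hrho); clear H; case: e'.
Qed.
End P5.
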